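(* Let $f:\mathbb R^d\to\mathbb R$ be continuous and convex, let $V\in\mathbb R^{d\times d}$ be positive definite, $\theta_0\in\mathbb R^d$, $b>0$, and $\mathcal E:=\{\theta\in\mathbb R^d:\|\theta-\theta_0\|_V\le b\}$. If $\tilde\theta\sim\mathcal N(\theta_0,b^2V^{-1})$, then $$\Pr\Big[f(\tilde\theta)\ge\max_{\theta\in\mathcal E}f(\theta)\Big]\ge\frac{1}{4\sqrt{e\pi}}.$$
   Context: $\|x\|_V=\sqrt{x^\top Vx}$. *)

(* Defs.v *)
From HB Require Import structures.
From mathcomp Require Import all_boot all_order all_algebra.
From mathcomp Require Import all_classical all_reals all_analysis.
Set Implicit Arguments. Unset Strict Implicit. Unset Printing Implicit Defensive.
Import Order.TTheory GRing.Theory Num.Theory.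
Import numFieldNormedType.Exports.
Local Open Scope classical_set_scope.
Local Open Scope ring_scope.

Section Defs.
Context {R : realType} {d : nat}.

Definition quadf (M : 'M[R]_d) (x : 'rV[R]_d) : R := (x *m M *m x^T) 0 0.

Definition Vnorm (V : 'M[R]_d) (x : 'rV[R]_d) : R := Num.sqrt (quadf V x).

Definition posdef (V : 'M[R]_d) : Prop :=
  V^T = V /\ forall x : 'rV[R]_d, x != 0 -> 0 < quadf V x.

Definition convex_fun (f : 'rV[R]_d -> R) : Prop :=
  forall (x y : 'rV[R]_d) (t : R), 0 <= t <= 1 ->
    f (t *: x + (1 - t) *: y) <= t * f x + (1 - t) * f y.

(* Multivariate normal law N(mu, Sigma) of a random vector X (Cramer-Wold
   definition): for every nonzero u, the real random variable <X, u> is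
   measurable with law N(<mu,u>, u^T Sigma u) (normal_prob takes mean and
   standard deviation). *)
Definition gaussian_vector {dT : measure_display} {T : measurableType dT}
    (P : probability T R) (X : T -> 'rV[R]_d) (mu : 'rV[R]_d) (Sigma : 'M[R]_d)
    : Prop :=
  forall u : 'rV[R]_d, u != 0 ->
    measurable_fun setT (fun w => (X w *m u^T) 0 0) /\
    forall A : set R, measurable A ->
      P ((fun w => (X w *m u^T) 0 0) @^-1` A) =
      normal_prob ((mu *m u^T) 0 0) (Num.sqrt (quadf Sigma u)) A.

End Defs.

(* Main.v *)
Require Import Defs.
From HB Require Import structures.
From mathcomp Require Import all_boot all_order all_algebra.
From mathcomp Require Import all_classical all_reals all_analysis.
Import Order.TTheory GRing.Theory Num.Theory.
Import numFieldNormedType.Exports.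
Import measurable_realfun.
Local Open Scope classical_set_scope.
Local Open Scope ring_scope.
From mathcomp Require Import ring lra.

Lemma floor_box (R : realType) (N x : R) : 0 < N ->
  (Num.floor (N * x))%:~R / N - N^-1 < x < (Num.floor (N * x))%:~R / N + N^-1.
Proof.
move=> N0; have := floor_itv (N * x) => /andP[h1 h2].
rewrite intrD /= in h2.
set F := (Num.floor (N * x))%:~R in h1 h2 *.
have e1 : F / N - N^-1 = (F - 1) / N by field; rewrite gt_eqF.
have e2 : F / N + N^-1 = (F + 1) / N by field; rewrite gt_eqF.
rewrite e1 e2 ltr_pdivrMr // ltr_pdivlMr //; apply/andP; split; lra.
Qed.

Section meas.
Variables (R : realType) (d : nat) (dT : measure_display) (T : measurableType dT).

Definition boxc (p : 'rV[int]_d * nat) (i : 'I_d) : R := (p.1 0 i)%:~R / (p.2.+1)%:R.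
Definition boxr (p : 'rV[int]_d * nat) : R := (p.2.+1)%:R^-1.
Definition Bx (p : 'rV[int]_d * nat) : set 'rV[R]_d :=
  [set x | forall i, boxc p i - boxr p < x 0 i < boxc p i + boxr p].

Lemma meas_open (th : T -> 'rV[R]_d)
  (hth : forall i : 'I_d, measurable_fun setT (fun w => th w 0 i))
  (O : set 'rV[R]_d) : open O -> measurable (th @^-1` O).
Proof.
move=> oO.
have -> : th @^-1` O = \bigcup_(p : 'rV[int]_d * nat)
    (if `[< Bx p `<=` O >] then th @^-1` Bx p else set0).
  apply/seteqP; split=> w /=.
  - move=> Ow.
    have := oO _ Ow => /nbhs_ballP [e e0 he].
    have [k hk] := @ltr_add_invr R 0 (e / 2) ltac:(by rewrite divr_gt0).
    rewrite add0r in hk.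
    set N : R := (k.+1)%:R.
    have N0 : 0 < N by rewrite /N ltr0n.
    pose z : 'rV[int]_d := \row_i Num.floor (N * th w 0 i).
    exists (z, k) => //.
    have inB : Bx (z, k) (th w).
      by move=> i; rewrite /boxc /boxr /= mxE -/N; exact: floor_box.
    have sub : `[< Bx (z, k) `<=` O >].
      apply/asboolP => x Bxx; apply: he; split => // i j.
      rewrite (ord1 i).
      have := Bxx j; have := inB j.
      rewrite /ball /= -/N.
      have hk' : boxr (z, k) < e / 2 := hk.
      move: (boxc (z, k) j) (boxr (z, k)) hk' => c r hk'.
      move=> /andP[a1 a2] /andP[b1 b2].
      rewrite ltr_norml; apply/andP; split; lra.
    by rewrite sub.
  - case=> p _; case: ifPn => // /asboolP sub Bw.
    exact: sub.
apply: countable_bigcupT_measurable; first exact: countableP.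
move=> p; case: ifPn => // _.
have -> : th @^-1` Bx p = \bigcap_(i in [set: 'I_d])
    ((fun w => th w 0 i) @^-1` `]boxc p i - boxr p, boxc p i + boxr p[).
  apply/seteqP; split=> w /=.
  - by move=> h i _; rewrite /= in_itv /=; exact: h.
  - by move=> h i; have := h i I; rewrite /= in_itv.
apply: fin_bigcap_measurable; first exact: finite_finset.
move=> i _.
have := hth i measurableT _ (measurable_itv `]boxc p i - boxr p, boxc p i + boxr p[).
by rewrite setTI.
Qed.
End meas.

Section tail.
Variable R : realType.

Lemma expR_lb (a : R) : 0 <= a <= 4 -> (1 - a/4)^+4 <= expR (-a).
Proof.
move=> /andP[a0 a4].
have h := expR_ge1Dx (-(a/4)).
have -> : -a = 4%:R * (-(a/4)) by field.
rewrite expRM_natl ler_pXn2r ?nnegrE ?expR_ge0//; lra.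
Qed.

Lemma numeric_fin :
  Num.sqrt 2 <= expR (-(9/32)) + expR (-(5/8)) + 2 * expR (-(3/2)) :> R.
Proof.
have h1 := @expR_lb (9/32). have h2 := @expR_lb (5/8). have h3 := @expR_lb (3/2).
have s2 : Num.sqrt 2 <= 3/2 :> R.
  rewrite -[X in _ <= X]ger0_norm; last lra.
  rewrite -sqrtr_sqr ler_sqrt; last exact: sqr_ge0.
  lra.
have e1 : (1 - (9/32)/4)^+4 >= 74/100 :> R by rewrite !exprS expr0; lra.
have e2 : (1 - (5/8)/4)^+4 >= 50/100 :> R by rewrite !exprS expr0; lra.
have e3 : (1 - (3/2)/4)^+4 >= 15/100 :> R by rewrite !exprS expr0; lra.
have := h1 ltac:(lra). have := h2 ltac:(lra). have := h3 ltac:(lra).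
lra.
Qed.

Local Open Scope ereal_scope.

Lemma pdfE (m s x : R) : (s != 0)%R ->
  normal_pdf m s x = (normal_peak s * expR (- (x - m) ^+ 2 / (s ^+ 2 *+ 2)))%R.
Proof. by move=> s0; rewrite normal_pdfE. Qed.

Lemma piece (m s a b L : R) : (a < b)%R -> (0 <= L)%R ->
  (forall x, (a < x <= b)%R -> (L <= normal_pdf m s x)%R) ->
  (L * (b - a))%:E <= \int[lebesgue_measure]_(x in `]a, b]) (normal_pdf m s x)%:E.
Proof.
move=> ab L0 Lle.
have mI : measurable (`]a, b] : set R) by [].
apply: (@le_trans _ _ (\int[lebesgue_measure]_(x in `]a, b]) (cst L%:E x))).
  rewrite integral_cst//.
  rewrite [X in (_ * X)%E](_ : _ = (b - a)%:E); last first.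
    have := lebesgue_measure_itv `]a,b].
    rewrite /= lte_fin ab -EFinD. move=> <-. reflexivity.
  by rewrite -EFinM.
apply: ge0_le_integral.
- exact: mI.
- by move=> x _; rewrite lee_fin.
- exact: measurable_cst.
- apply/measurable_EFinP.
  exact: (measurable_funS measurableT (@subsetT _ _) (measurable_normal_pdf m s)).
- by move=> x /=; rewrite in_itv /= => /Lle; rewrite lee_fin.
Qed.

Lemma split_int (m s a b c : R) : (a <= b)%R -> (b <= c)%R ->
  \int[lebesgue_measure]_(x in `]a, c]) (normal_pdf m s x)%:E =
  \int[lebesgue_measure]_(x in `]a, b]) (normal_pdf m s x)%:E +
  \int[lebesgue_measure]_(x in `]b, c]) (normal_pdf m s x)%:E.
Proof.
move=> ab bc.
rewrite (@itv_bndbnd_setU _ _ (BRight a) (BRight b) (BRight c)); [|by rewrite bnd_simp|by rewrite bnd_simp].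
rewrite ge0_integral_setU //.
- apply/measurable_EFinP.
  exact: (measurable_funS measurableT (@subsetT _ _) (measurable_normal_pdf m s)).
- by move=> x _; rewrite lee_fin normal_pdf_ge0.
- rewrite disj_set2E; apply/eqP/seteqP; split=> x //=.
  rewrite !in_itv/= => -[/andP[_ xb] /andP[bx _]].
  by move: (lt_le_trans bx xb); rewrite ltxx.
Qed.

Local Close Scope ereal_scope.
Lemma tail (m s c : R) : (0 < s)%R -> (c <= m + s)%R ->
  ((1 / (4 * Num.sqrt (expR 1 * pi)))%:E <= normal_prob m s `]c, +oo[)%E.
Proof.
move=> s0 cs.
have s0' : (s != 0)%R by rewrite gt_eqF.
set p := normal_peak s.
have p0 : (0 < p)%R by exact: normal_peak_gt0.
have lowb : forall t1 t2 : R, (0 <= t1 < t2)%R ->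
    ((p * expR (- (t2 ^+ 2) / 2) * (s * (t2 - t1)))%:E <=
     \int[lebesgue_measure]_(x in `](m + s * t1)%R, (m + s * t2)%R]) (normal_pdf m s x)%:E)%E.
  move=> t1 t2 /andP[t10 t12].
  have -> : (s * (t2 - t1) = (m + s * t2) - (m + s * t1))%R by ring.
  apply: piece.
  - by rewrite ltrD2l ltr_pM2l.
  - by apply: mulr_ge0; [exact: (ltW p0)|exact: expR_ge0].
  move=> x /andP[x1 x2]; rewrite pdfE // ler_pM2l // ler_expR.
  rewrite !mulNr lerN2.
  have st1 : (0 <= s * t1)%R by apply: mulr_ge0 => //; exact: (ltW s0).
  have hx0 : (0 <= x - m)%R by lra.
  have hx1 : (x - m <= s * t2)%R by lra.
  have hsq : ((x - m) ^+ 2 <= (s * t2) ^+ 2)%R by rewrite ler_pXn2r ?nnegrE //; lra.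
  rewrite ler_pdivrMr; last by rewrite mulrn_wgt0 // exprn_gt0.
  rewrite exprMn in hsq.
  have -> : (t2 ^+ 2 / 2 * (s ^+ 2 *+ 2) = s ^+ 2 * t2 ^+ 2)%R by rewrite -mulr_natr; field.
  exact: hsq.
apply: (@le_trans _ _ (\int[lebesgue_measure]_(x in `](m + s * 1)%R, (m + s * 2)%R]) (normal_pdf m s x)%:E)%E); last first.
  apply: ge0_subset_integral => //.
  - apply/measurable_EFinP.
    exact: (measurable_funS measurableT (@subsetT _ _) (measurable_normal_pdf m s)).
  - by move=> x _; rewrite lee_fin normal_pdf_ge0.
  - move=> x /=; rewrite !in_itv /= andbT => /andP[h _].
    by apply: le_lt_trans h; rewrite mulr1.
rewrite (@split_int _ _ _ (m + s * (5/4))%R); [|by rewrite lerD2l ler_pM2l//; lra|by rewrite lerD2l ler_pM2l//; lra].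
rewrite (@split_int _ _ (m + s * (5/4))%R (m + s * (3/2))%R); [|by rewrite lerD2l ler_pM2l//; lra|by rewrite lerD2l ler_pM2l//; lra].
have l1 := lowb 1 (5/4) ltac:(apply/andP; split; lra).
have l2 := lowb (5/4) (3/2) ltac:(apply/andP; split; lra).
have l3 := lowb (3/2) 2 ltac:(apply/andP; split; lra).
apply: le_trans (leeD l1 (leeD l2 l3)).
rewrite -!EFinD lee_fin.
set h := expR (1 / 2 : R).
set q := Num.sqrt (pi : R).
set r2 := Num.sqrt (2 : R).
have h0 : (0 < h)%R by exact: expR_gt0.
have q0 : (0 < q)%R by rewrite sqrtr_gt0 pi_gt0.
have r20 : (0 < r2)%R by rewrite sqrtr_gt0.
have eh : Num.sqrt (expR 1 * pi) = (h * q)%R.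
  rewrite sqrtrM ?expR_ge0 //; congr (_ * _)%R.
  rewrite -[X in Num.sqrt X](_ : h ^+ 2 = expR 1)%R; first by rewrite sqrtr_sqr gtr0_norm.
  by rewrite -expRM_natl; congr expR; field.
have ep : p = (1 / (s * q * r2))%R.
  rewrite /p /normal_peak.
  have -> : (s ^+ 2 * pi *+ 2 = s ^+ 2 * (pi * 2) :> R)%R by rewrite -mulr_natr mulrA.
  rewrite sqrtrM ?sqr_ge0 // sqrtr_sqr gtr0_norm // sqrtrM; last exact: (ltW (pi_gt0 R)).
  by rewrite mulrA div1r.
have eE : forall a : R, expR (- a - 1/2)%R = (expR (- a) / h)%R.
  by move=> a; rewrite expRB.
have -> : (- (5 / 4) ^+ 2 / 2 = - (9/32) - 1/2 :> R)%R by rewrite expr2; field.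
have -> : (- (3 / 2) ^+ 2 / 2 = - (5/8) - 1/2 :> R)%R by rewrite expr2; field.
have -> : (- 2 ^+ 2 / 2 = - (3/2) - 1/2 :> R)%R by rewrite expr2; field.
rewrite !eE eh ep.
have nf := numeric_fin.
set F1 := expR (- (9/32)) in nf *. set F2 := expR (- (5/8)) in nf *. set F3 := expR (- (3/2)) in nf *.
have -> : (1 / (s * q * r2) * (F1 / h) * (s * (5 / 4 - 1)) +
   (1 / (s * q * r2) * (F2 / h) * (s * (3 / 2 - 5 / 4)) +
    1 / (s * q * r2) * (F3 / h) * (s * (2 - 3 / 2))) = (F1 + F2 + 2 * F3) * (1 / (4 * h * q * r2)))%R.
  by field; rewrite ?mulf_neq0 ?gt_eqF.
have -> : (1 / (4 * (h * q)) = r2 * (1 / (4 * h * q * r2)))%R.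
  by field; rewrite ?mulf_neq0 ?gt_eqF.
apply: ler_wpM2r nf; rewrite divr_ge0 //; apply/ltW; rewrite !mulr_gt0 //.
Qed.
End tail.

Section geo.
Variables (R : realType) (d : nat).
Implicit Types (V : 'M[R]_d) (x y : 'rV[R]_d).

Definition ip V x y : R := (x *m V *m y^T) 0 0.

Lemma quadfE V x : quadf V x = ip V x x. Proof. by []. Qed.

Lemma tr11 (A : 'M[R]_1) : A^T 0 0 = A 0 0. Proof. by rewrite mxE. Qed.

Lemma ip_sym V x y : V^T = V -> ip V x y = ip V y x.
Proof.
move=> sV; rewrite /ip -tr11 !trmx_mul trmxK sV mulmxA //.
Qed.

Lemma ipDl V x y z : ip V (x + y) z = ip V x z + ip V y z.
Proof. by rewrite /ip !mulmxDl mxE. Qed.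

Lemma ipDr V x y z : ip V z (x + y) = ip V z x + ip V z y.
Proof. by rewrite /ip linearD /= mulmxDr mxE. Qed.

Lemma ipZl V a x y : ip V (a *: x) y = a * ip V x y.
Proof. by rewrite /ip -!scalemxAl mxE. Qed.

Lemma ipZr V a x y : ip V x (a *: y) = a * ip V x y.
Proof. by rewrite /ip linearZ /= -scalemxAr mxE. Qed.

Lemma ipNl V x y : ip V (- x) y = - ip V x y.
Proof. by rewrite -scaleN1r ipZl mulN1r. Qed.

Lemma ipNr V x y : ip V x (- y) = - ip V x y.
Proof. by rewrite -scaleN1r ipZr mulN1r. Qed.

Lemma quad_expand V x y : V^T = V ->
  quadf V (x + y) = quadf V x + 2 * ip V x y + quadf V y.
Proof.
move=> sV; rewrite !quadfE ipDl !ipDr (ip_sym _ x y sV).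
set u := ip V x x. set v := ip V y x. set w := ip V y y. ring.
Qed.

Lemma quadZ V a x : quadf V (a *: x) = a ^+ 2 * quadf V x.
Proof. by rewrite !quadfE ipZl ipZr mulrA expr2. Qed.

Lemma quadN V x : quadf V (- x) = quadf V x.
Proof. by rewrite !quadfE ipNl ipNr opprK. Qed.

Lemma quad0 V : quadf V 0 = 0.
Proof. by rewrite quadfE /ip !mul0mx mxE. Qed.

Lemma posdef_ge0 V x : posdef V -> 0 <= quadf V x.
Proof.
move=> [_ pV]; have [->|x0] := eqVneq x 0; first by rewrite quad0.
exact/ltW/pV.
Qed.

Lemma posdef_eq0 V x : posdef V -> quadf V x = 0 -> x = 0.
Proof.
move=> [_ pV] h; apply/eqP; apply/negPn/negP => x0.
by have := pV x x0; rewrite h ltxx.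
Qed.

Lemma posdef_unit V : posdef V -> V \in unitmx.
Proof.
move=> pV; rewrite -row_free_unit; apply: inj_row_free => v vV.
apply: (posdef_eq0 V v pV).
by rewrite quadfE /ip vV !mul0mx mxE.
Qed.

Lemma ipVinv V x y : V \in unitmx -> ip (invmx V) (x *m V) y = (x *m y^T) 0 0.
Proof. by move=> uV; rewrite /ip -(mulmxA x) mulmxV // mulmx1. Qed.



Lemma conv_step (f : 'rV[R]_d -> R) (ts x z : 'rV[R]_d) (s : R) :
  convex_fun f -> 0 < s -> z = ts + s *: (ts - x) -> f z <= f ts -> f ts <= f x.
Proof.
move=> cf s0 ez fz.
set t := 1 / (1 + s).
have t01 : 0 <= t <= 1.
  apply/andP; split; first by rewrite divr_ge0 //; lra.
  by rewrite /t ler_pdivrMr; lra.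
have h := cf z x t t01.
have eq : t *: z + (1 - t) *: x = ts.
  rewrite ez; apply/rowP => i; rewrite !mxE /t; field; apply/eqP; lra.
rewrite eq in h.
have t1 : 0 < 1 - t by rewrite subr_gt0 /t ltr_pdivrMr; lra.
have h2 : f ts <= t * f ts + (1 - t) * f x.
  apply: (le_trans h); rewrite lerD2r; apply: ler_wpM2l => //.
  by case/andP: t01.
have h3 : (1 - t) * f ts <= (1 - t) * f x.
  set a := f ts in h2 *; set b := f x in h2 *; set c := t in h2 t1 *.
  rewrite mulrBl mul1r; lra.
by rewrite -(ler_pM2l t1).
Qed.

Lemma conv_key (f : 'rV[R]_d -> R) V (th0 ts x : 'rV[R]_d) (b : R) :
  convex_fun f -> posdef V -> 0 < b ->
  (forall th, quadf V (th - th0) <= b ^+ 2 -> f th <= f ts) ->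
  quadf V (ts - th0) <= b ^+ 2 ->
  (ip V (ts - th0) (ts - x) < 0 \/ ts = th0) ->
  f ts <= f x.
Proof.
move=> cf pV b0 hmax hts hc.
have sV := pV.1.
set y := ts - th0 in hts hc *; set w := ts - x in hc *.
have Q0 : 0 <= quadf V w by exact: posdef_ge0.
suff [s s0 hs] : exists2 s, 0 < s & quadf V (y + s *: w) <= b ^+ 2.
  apply: (@conv_step f ts x (ts + s *: w) s cf s0) => //.
  apply: hmax; have -> : ts + s *: w - th0 = y + s *: w.
    by rewrite /y addrAC.
  exact: hs.
set Q := quadf V w in Q0 *.
case: hc => [a0|e0].
- set a := ip V y w in a0.
  exists (- a / (Q + 1)); first by rewrite divr_gt0 //; lra.
  set s := - a / (Q + 1).
  have hs : s * (Q + 1) = - a by rewrite /s mulfVK //; apply/eqP; lra.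
  have s0 : 0 < s by rewrite /s divr_gt0 //; lra.
  rewrite quad_expand // quadZ ipZr -/Q -/a.
  have h1 : s * Q <= - a by rewrite -hs mulrDr mulr1; lra.
  have h2 : s * (s * Q) <= s * (- a) by rewrite ler_wpM2l //; exact: ltW.
  have -> : s ^+ 2 * Q = s * (s * Q) by rewrite expr2 mulrA.
  set u := s * (s * Q) in h2 *. set qy := quadf V y in hts *.
  have : s * a < 0 by rewrite pmulr_rlt0.
  rewrite mulrN in h2. lra.
- exists (b / (Q + 1)); first by rewrite divr_gt0 //; lra.
  have y0 : y = 0 by rewrite /y e0 subrr.
  rewrite y0 add0r quadZ -/Q.
  rewrite expr_div_n mulrAC ler_pdivrMr; last by rewrite exprn_gt0 //; lra.
  apply: ler_wpM2l; first exact: sqr_ge0.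
  rewrite expr2; nra.
Qed.

Lemma cont_sum (I : finType) (F : I -> 'rV[R]_d -> R) :
  (forall i, continuous (F i)) -> continuous (fun x => \sum_i F i x).
Proof.
move=> hF.
suff H : forall r : seq I, continuous (fun x => \sum_(i <- r) F i x) by exact: H.
elim=> [|a r IH].
  have -> : (fun x => \sum_(i <- [::]) F i x) = (fun=> 0) by apply/funext => x; rewrite big_nil.
  exact: cst_continuous.
have -> : (fun x => \sum_(i <- a :: r) F i x) = (fun x => F a x + \sum_(i <- r) F i x).
  by apply/funext => x; rewrite big_cons.
move=> x; exact: (continuousD (hF a x) (IH x)).
Qed.

Lemma quad_cont V : continuous (quadf V).
Proof.
have -> : quadf V = (fun x => \sum_j (\sum_k x 0 k * V k j) * x 0 j).
  apply/funext => x; rewrite /quadf !mxE; apply: eq_bigr => j _.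
  by rewrite !mxE.
apply: cont_sum => j x.
have h1 : continuous (fun y : 'rV[R]_d => \sum_k y 0 k * V k j).
  apply: (@cont_sum _ (fun k y => y 0 k * V k j)) => k y.
  exact: (continuousM (@coord_continuous R 1 d 0 k y) (@cst_continuous _ _ (V k j) y)).
exact: (continuousM (h1 x) (@coord_continuous R 1 d 0 j x)).
Qed.

Lemma coercive V : posdef V -> exists2 c, 0 < c & forall x, c * `|x| ^+ 2 <= quadf V x.
Proof.
move=> pV.
case: (pselect (exists x : 'rV[R]_d, x != 0)) => [[x0 hx0]|hno]; last first.
  exists 1 => // x.
  have -> : x = 0 by apply/eqP; apply/negPn/negP => hx; apply: hno; exists x.
  by rewrite normr0 expr0n /= mulr0 quad0.
set S := [set x : 'rV[R]_d | `|x| = 1].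
have S0 : S !=set0.
  exists (`|x0|^-1 *: x0); rewrite /S /= mx_normZ normfV normr_id mulVf //.
  by rewrite normr_eq0.
have cS : compact S.
  apply: bounded_closed_compact.
    exists 1; split; first exact: num_real.
    by move=> M M1 x; rewrite /S /= => ->; exact: ltW.
  have hn : continuous (fun x : 'rV[R]_d => `|x|) by move=> x; exact: norm_continuous.
  exact: ((continuous_closedP _).1 hn _ (@closed_eq R 1)).
have [c0 c0S minc] := EVT_min_rV S0 cS (continuous_subspaceT (@quad_cont V)).
have c0n : c0 != 0.
  by apply/negP => /eqP e; move: c0S; rewrite inE /S /= e normr0 => /esym/eqP; rewrite oner_eq0.
exists (quadf V c0); first by case: pV => _ h; exact: h.
move=> x; have [->|x0n] := eqVneq x 0; first by rewrite normr0 expr0n /= mulr0 quad0.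
set u := `|x|^-1 *: x.
have uS : u \in S.
  by rewrite inE /S /= /u mx_normZ normfV normr_id mulVf // normr_eq0.
have -> : x = `|x| *: u by rewrite /u scalerA mulfV ?normr_eq0 // scale1r.
rewrite quadZ mx_normZ normr_id -/u.
have -> : `|u| = 1 by move: uS; rewrite inE.
rewrite mulr1 mulrC; apply: ler_wpM2l; first exact: sqr_ge0.
exact: minc.
Qed.

Lemma maximizer (f : 'rV[R]_d -> R) V (th0 : 'rV[R]_d) (b : R) :
  continuous f -> posdef V -> 0 < b ->
  exists ts, quadf V (ts - th0) <= b ^+ 2 /\
    forall th, quadf V (th - th0) <= b ^+ 2 -> f th <= f ts.
Proof.
move=> cf pV b0.
set E := [set th : 'rV[R]_d | quadf V (th - th0) <= b ^+ 2].
have E0 : E !=set0 by exists th0; rewrite /E /= subrr quad0; exact: sqr_ge0.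
have [c c0 hc] := coercive V pV.
have cE : compact E.
  apply: bounded_closed_compact.
    exists (`|th0| + 1 + b ^+ 2 / c); split; first exact: num_real.
    move=> M hM th; rewrite /E /= => hth.
    apply: ltW; apply: le_lt_trans hM.
    have h1 : `|th| <= `|th0| + `|th - th0|.
      by rewrite -{1}(subrK th0 th) addrC ler_normD.
    suff : `|th - th0| <= 1 + b ^+ 2 / c by lra.
    set y := `|th - th0| in h1 *.
    have hy := hc (th - th0); rewrite -/y in hy.
    have y0 : 0 <= y by exact: normr_ge0.
    have : y ^+ 2 <= b ^+ 2 / c.
      by rewrite ler_pdivlMr // mulrC; exact: le_trans hy hth.
    case: (lerP y 1) => hy1 h2.
      have : 0 <= b ^+ 2 / c by apply: divr_ge0; [exact: sqr_ge0|exact: ltW].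
      lra.
    have : y <= y ^+ 2 by rewrite expr2 ler_peMl //; exact: ltW.
    lra.
  have hf : continuous (fun th : 'rV[R]_d => th - th0).
    move=> x; exact: (continuousB (@cvg_id _ _) (@cst_continuous _ _ th0 x)).
  have hg : continuous (fun th : 'rV[R]_d => quadf V (th - th0)).
    move=> x; exact: (continuous_comp (hf x) (quad_cont V _)).
  exact: ((continuous_closedP _).1 hg _ (@closed_le R (b ^+ 2))).
have [ts tsE hts] := EVT_max_rV E0 cE (continuous_subspaceT cf).
exists ts; split; first by move: tsE; rewrite inE.
by move=> th hth; apply: hts; rewrite inE.
Qed.
End geo.
Arguments ip {R d}.


Lemma quadfZm (R : realType) (d : nat) (a : R) (M : 'M[R]_d) (x : 'rV[R]_d) :
  quadf (a *: M) x = a * quadf M x.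
Proof. by rewrite /quadf -scalemxAr -scalemxAl mxE. Qed.

Lemma coord_delta (R : realType) (d : nat) (x : 'rV[R]_d) (i : 'I_d) :
  (x *m (delta_mx 0 i : 'rV[R]_d)^T) 0 0 = x 0 i.
Proof.
rewrite trmx_delta mxE (bigD1 i) //= mxE !eqxx mulr1 big1 ?addr0 // => k ki.
by rewrite mxE (negbTE ki) mulr0.
Qed.

Lemma subm00 (R : realType) (A B : 'M[R]_1) : (A - B) 0 0 = A 0 0 - B 0 0.
Proof. by rewrite !mxE. Qed.

Theorem mainTheorem5 (R : realType) (d : nat) (f : 'rV[R]_d -> R)
    (V : 'M[R]_d) (theta0 : 'rV[R]_d) (b : R)
    (dT : measure_display) (T : measurableType dT) (P : probability T R)
    (theta : T -> 'rV[R]_d) :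
  continuous f -> convex_fun f -> posdef V -> 0 < b ->
  gaussian_vector P theta theta0 (b ^+ 2 *: invmx V) ->
  ((1 / (4 * Num.sqrt (expR 1 * pi)))%:E <=
    P [set w | forall th : 'rV[R]_d, (Vnorm V (th - theta0) <= b)%R ->
                 (f th <= f (theta w))%R])%E.
Proof.
move=> cf cvx pV b0 hG.
have sV := pV.1.
have eb : Num.sqrt (b ^+ 2) = b by rewrite sqrtr_sqr gtr0_norm.
have Vb : forall th, (Vnorm V (th - theta0) <= b) = (quadf V (th - theta0) <= b ^+ 2).
  by move=> th; rewrite /Vnorm -[in LHS]eb ler_sqrt //; exact: sqr_ge0.
have [ts [hts hmax]] := @maximizer R d f V theta0 b cf pV b0.
have -> : [set w | forall th : 'rV[R]_d, (Vnorm V (th - theta0) <= b)%R ->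
                 (f th <= f (theta w))%R] = [set w | f ts <= f (theta w)].
  apply/seteqP; split => w /=.
  - by move=> h; apply: h; rewrite Vb.
  - by move=> h th; rewrite Vb => hth; exact: le_trans (hmax th hth) h.
case: (eqVneq ts theta0) => [e0|ne0].
  have -> : [set w | f ts <= f (theta w)] = setT.
    apply/seteqP; split => w // _.
    by apply: (@conv_key R d f V theta0 ts (theta w) b cvx pV b0 hmax hts); right.
  rewrite probability_setT lee_fin.
  have h1 : 1 <= Num.sqrt (expR 1 * pi) :> R.
    rewrite -[X in X <= _]sqrtr1 ler_sqrt; last by rewrite mulr_ge0 ?expR_ge0 ?pi_ge0.
    have := expR_ge1Dx (1 : R); have := pi_ge2 R; nra.
  rewrite ler_pdivrMr; last lra.
  lra.
set y := ts - theta0 in hts *.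
have yn0 : y != 0 by rewrite subr_eq0.
have qy0 : 0 < quadf V y by exact: pV.2.
set u := y *m V.
have ipu : forall z, ip V y z = (z *m u^T) 0 0.
  by move=> z; rewrite /ip -tr11 trmx_mul trmxK.
have un0 : u != 0.
  apply/negP => /eqP u0; move: qy0; rewrite quadfE ipu u0 linear0 mulmx0 mxE ltxx.
  done.
have [mg hP] := hG u un0.
set g := fun w => (theta w *m u^T) 0 0.
set m := (theta0 *m u^T) 0 0.
set sg := Num.sqrt (quadf (b ^+ 2 *: invmx V) u).
set c := (ts *m u^T) 0 0.
have hth : forall i : 'I_d, measurable_fun setT (fun w => theta w 0 i).
  move=> i.
  have di : delta_mx 0 i != 0 :> 'rV[R]_d.
    apply/negP => /eqP/matrixP/(_ 0 i); rewrite !mxE !eqxx /= => /eqP.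
    by rewrite oner_eq0.
  have [hm _] := hG _ di.
  have -> : (fun w => theta w 0 i) = (fun w => (theta w *m (delta_mx 0 i : 'rV[R]_d)^T) 0 0).
    by apply/funext => w; rewrite coord_delta.
  exact: hm.
have mEv : measurable [set w | f ts <= f (theta w)].
  have -> : [set w | f ts <= f (theta w)] = ~` (theta @^-1` [set x | f x < f ts]).
    apply/seteqP; split => w /=.
    - by move=> h h2; move: (le_lt_trans h h2); rewrite ltxx.
    - by move=> /negP; rewrite -leNgt.
  apply: measurableC; apply: meas_open => //.
  exact: ((continuousP f).1 cf _ (@open_lt R (f ts))).
have mH : measurable (g @^-1` `]c, +oo[).
  have := mg measurableT _ (measurable_itv `]c, +oo[).
  by rewrite setTI.
have HEv : g @^-1` `]c, +oo[ `<=` [set w | f ts <= f (theta w)].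
  move=> w; rewrite /= in_itv /= andbT => hw.
  apply: (@conv_key R d f V theta0 ts (theta w) b cvx pV b0 hmax hts); left.
  by rewrite ipu mulmxBl subm00 subr_lt0.
apply: (le_trans _ (le_measure _ _ _ HEv)); last 2 first.
- exact/mem_set/mH.
- exact/mem_set/mEv.
have hPc := hP _ (measurable_itv `]c, +oo[).
apply: (@le_trans _ _ (normal_prob m sg `]c, +oo[)); last first.
  by rewrite -hPc.
have qV : quadf (b ^+ 2 *: invmx V) u = b ^+ 2 * quadf V y.
  rewrite quadfZm; congr (_ * _).
  rewrite quadfE ipVinv; last exact: posdef_unit.
  by rewrite /u trmx_mul sV mulmxA.
set q := quadf V y in qy0 qV.
have sq0 : 0 < Num.sqrt q by rewrite sqrtr_gt0.
have esg : sg = b * Num.sqrt q.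
  by rewrite /sg qV sqrtrM ?sqr_ge0 // eb.
have hsq : Num.sqrt q <= b by rewrite -[X in _ <= X]eb ler_sqrt //; exact: sqr_ge0.
apply: tail.
  by rewrite esg mulr_gt0.
have ecm : c - m = q.
  by rewrite /c /m -subm00 -mulmxBl -/y /q quadfE ipu.
have : q <= b * Num.sqrt q.
  rewrite -{1}(sqr_sqrtr (ltW qy0)) expr2 ler_pM2r //.
rewrite esg; lra.
Qed.
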